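(* Let $a,b,e\in\mathbb Z$ with $a\neq 0$, $e>0$, such that $h_2(j)=aj^2+bj+e$ satisfies $h_2(j)\ge 0$ for all integers $j\ge 0$ (so $h_2\in\mathcal H_0$; necessarily $a>0$). Let $\alpha=a/e$, $\beta=b/e$. If $\alpha+\beta<2$, then $\operatorname{hdepth}(h_2)=c(h_2)$. If $\alpha+\beta\ge 2$, then $\operatorname{hdepth}(h_2)\ge 2$.
   Context: Let $\mathcal H_0$ denote the set of functions $h:\mathbb Z_{\ge 0}\to\mathbb Z_{\ge 0}$ with $h(0)>0$. For $h\in\mathcal H_0$ and integers $0\le k\le d$, put $\beta_k^d(h)=\sum_{j=0}^k(-1)^{k-j}\binom{d-j}{k-j}h(j)$. The Hilbert depth of $h$ is $\operatorname{hdepth}(h)=\max\{d\in\mathbb Z_{\ge0}:\ \beta_k^d(h)\ge 0\text{ for all }0\le k\le d\}$; this set contains $d=0$ and is known to be bounded above by $c(h):=\lfloor h(1)/h(0)\rfloor$, so the maximum exists. Note $c(h_2)=\lfloor\alpha+\beta\rfloor+1$. *)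

(* Defs.v *)
From mathcomp Require Import all_boot all_order all_algebra.
Set Implicit Arguments. Unset Strict Implicit. Unset Printing Implicit Defensive.
Import Order.TTheory GRing.Theory Num.Theory.
Local Open Scope ring_scope.

(* Functions h : Z_{>=0} -> Z_{>=0} are represented as  h : nat -> int
   (nonnegativity is a separate hypothesis). *)

Definition beta (h : nat -> int) (d k : nat) : int :=
  \sum_(0 <= j < k.+1) (-1) ^+ (k - j) * ('C(d - j, k - j))%:Z * h j.

Definition hdepth_ok (h : nat -> int) (d : nat) : Prop :=
  forall k : nat, (k <= d)%N -> 0 <= beta h d k.

Definition is_hdepth (h : nat -> int) (d : nat) : Prop :=
  hdepth_ok h d /\ forall d' : nat, hdepth_ok h d' -> (d' <= d)%N.

Definition cbound (h : nat -> int) : int := (h 1%N %/ h 0%N)%Z.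

(* Main.v *)
Require Import Defs.
From mathcomp Require Import all_boot all_order all_algebra.
From mathcomp Require Import zify ring lra.
Import Order.TTheory GRing.Theory Num.Theory.
Local Open Scope ring_scope.

Lemma beta1 h d : (1 <= d)%N -> beta h d 1 = h 1%N - d%:Z * h 0%N.
Proof.
move=> d1; rewrite /beta !big_nat_recr //= big_geq // subn0 subnn bin0 bin1 expr0 expr1.
rewrite add0r mulr1 mul1r mulN1r mulNr; lia.
Qed.

Lemma beta22 h : beta h 2 2 = h 0%N - h 1%N + h 2%N.
Proof. rewrite /beta !big_nat_recr //= big_geq //=. rewrite /= !expr0 !expr1 expr2 !subn0 !subnn /=. rewrite ?binn ?bin0. lia. Qed.

Lemma beta0 h d : beta h d 0 = h 0%N.
Proof. rewrite /beta big_nat1 subn0 bin0 expr0; lia. Qed.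

Lemma ok0 h : 0 <= h 0%N -> hdepth_ok h 0.
Proof. by move=> H [|k] //= _; rewrite beta0. Qed.

Lemma ok1 h : 0 <= h 0%N -> h 0%N <= h 1%N -> hdepth_ok h 1.
Proof.
move=> H0 H1 [|[|k]] //= _; first by rewrite beta0.
rewrite beta1 //; lia.
Qed.

Lemma ok2 h : 0 <= h 0%N -> 2 * h 0%N <= h 1%N -> 0 <= h 0%N - h 1%N + h 2%N ->
  hdepth_ok h 2.
Proof.
move=> H0 H1 H2 [|[|[|k]]] //= _; first by rewrite beta0.
  rewrite beta1 //; lia.
by rewrite beta22.
Qed.

Lemma ub h d : (1 <= d)%N -> hdepth_ok h d -> d%:Z * h 0%N <= h 1%N.
Proof. move=> d1 /(_ 1%N d1); rewrite beta1 //; lia. Qed.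

Definition okb h d := [forall k : 'I_d.+1, 0 <= beta h d k].

Lemma okbP h d : okb h d <-> hdepth_ok h d.
Proof.
split.
  move=> /forallP H k kd. exact: (H (Ordinal (kd : (k < d.+1)%N))).
by move=> H; apply/forallP => k; apply: H; rewrite -ltnS.
Qed.

Theorem lemma2p2 (a b e : int) :
  a != 0 -> 0 < e ->
  (forall j : nat, 0 <= a * (j%:Z) ^+ 2 + b * j%:Z + e) ->
  let h2 := fun j : nat => a * (j%:Z) ^+ 2 + b * j%:Z + e in
  let alpha : rat := a%:~R / e%:~R in
  let beta0 : rat := b%:~R / e%:~R in
  (alpha + beta0 < 2 -> is_hdepth h2 `|cbound h2|%N) /\
  (2 <= alpha + beta0 -> exists d : nat, is_hdepth h2 d /\ (2 <= d)%N).
Proof.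
move=> a0 e0 Hh h2 alpha beta0.
have apos : 0 < a.
  have := Hh (`|b|%N + `|e|%N + 1)%N.
  set j := (`|b|%N + `|e|%N + 1)%N.
  have jb : `|b| + e + 1 = j%:Z by rewrite /j; lia.
  move=> H; case: (ltrgtP a 0) => // an.
  - have hj : 0 <= j%:Z * j%:Z by lia.
    have : (a + 1) * (j%:Z * j%:Z) <= 0.
      by rewrite mulr_le0_ge0 //; lia.
    rewrite expr2 in H. nia.
  - by move: a0; rewrite an.
have h0E : h2 0%N = e by rewrite /h2; lia.
have h1E : h2 1%N = a + b + e by rewrite /h2; lia.
have h2E : h2 2%N = 4 * a + 2 * b + e by rewrite /h2 expr2; lia.
have h1nn : 0 <= a + b + e by rewrite -h1E; apply: Hh.
set c := cbound h2.
have cE : h2 1%N = c * e + (h2 1%N %% e)%Z by rewrite /c /cbound h0E -divz_eq.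
have r0 : 0 <= (h2 1%N %% e)%Z by apply: modz_ge0; lia.
have r1 : (h2 1%N %% e)%Z < e by apply: ltz_pmod.
move: cE r0 r1; set r := (h2 1%N %% e)%Z; rewrite h1E => cE r0 r1.
have upper : forall d, hdepth_ok h2 d -> (d <= `|c|)%N.
  move=> [|d] // /(@ub h2 d.+1 isT); rewrite h0E h1E => H.
  have : d.+1%:Z < c + 1 by nia.
  lia.
have hrat : (alpha + beta0 < 2) = (a + b < 2 * e).
  rewrite /alpha /beta0 -mulrDl ltr_pdivrMr ?ltr0z //.
  by rewrite -[2 : rat]/((2:int)%:~R) -intrD -intrM ltr_int.
split.
  rewrite hrat => Hab; split; last by [].
  have [hn|hn] := ltP (a + b) 0.
    have -> : c = 0 by nia.
    by apply: ok0; lia.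
  have [hn1|hn1] := ltP (a + b) e.
    have -> : c = 1 by nia.
    by apply: ok1; rewrite ?h0E ?h1E; lia.
  have -> : c = 2 by nia.
  by apply: ok2; rewrite ?h0E ?h1E ?h2E; lia.
rewrite leNgt hrat -leNgt => Hab.
have ok2' : hdepth_ok h2 2 by apply: ok2; rewrite ?h0E ?h1E ?h2E; lia.
have exP : exists n, okb h2 n by exists 2%N; apply/okbP.
have ubP : forall n, okb h2 n -> (n <= `|c|)%N by move=> n /okbP; apply: upper.
case: (ex_maxnP exP ubP) => m /okbP Hm Hmax.
exists m; split; first split => //.
  by move=> d' /okbP; apply: Hmax.
by apply: Hmax; apply/okbP.
Qed.
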